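(* Let $(G,o)$ be a strong orientation of a cubic graph $G$. Let $e_1=u_1v_1$ and $e_2=u_2v_2$ be two non-adjacent edges of $G$ oriented $u_1\to v_1$ and $u_2\to v_2$ in $(G,o)$, and assume both $e_1$ and $e_2$ are deletable in $(G,o)$. Let $G'$ be the cubic graph obtained from $G$ by subdividing $e_1$ with a new vertex $x_1$, subdividing $e_2$ with a new vertex $x_2$, and adding the edge $x_1x_2$. Let $(G',o')$ be the orientation of $G'$ with $u_1\to x_1$, $x_1\to v_1$, $x_1\to x_2$, $u_2\to x_2$, $x_2\to v_2$, and $o'(e)=o(e)$ for every other edge $e$ of $G'$. Then $(G',o')$ is a strong orientation and $$D(G',o')\supseteq \bigl(D(G,o)\setminus\{e_1,e_2\}\bigr)\cup\{x_1v_1,\;x_1x_2,\;u_2x_2\}.$$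
   Context: An orientation is strong if for every ordered pair of distinct vertices $u,v$ there is a directed $uv$-path. An edge $e$ is deletable in an orientation $(G,o)$ if the restriction of $o$ to $E(G)\setminus\{e\}$ is a strong orientation of $G-e$. $D(G,o)$ denotes the set of edges deletable in $(G,o)$. *)

(* Defs.v *)
From mathcomp Require Import all_boot.
Set Implicit Arguments. Unset Strict Implicit. Unset Printing Implicit Defensive.

Definition simple_graph (T : finType) (adj : rel T) : Prop :=
  (forall x y, adj x y = adj y x) /\ (forall x, ~~ adj x x).

Definition cubic (T : finType) (adj : rel T) : Prop :=
  forall v, #|[set w | adj v w]| = 3.

Definition is_orientation (T : finType) (adj : rel T) (o : rel T) : Prop :=
  forall x y, adj x y = (o x y || o y x) /\ ~~ (o x y && o y x).

Definition strong (T : finType) (o : rel T) : Prop :=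
  forall x y, connect o x y.

Definition del_edge (T : finType) (o : rel T) (a b : T) : rel T :=
  [rel x y | o x y && ~~ (((x == a) && (y == b)) || ((x == b) && (y == a)))].

(* The edge ab is deletable in (G,o): ab is an edge and the restriction of o
   to G - ab is strong.  D(G,o) is the set of such (unordered) edges. *)
Definition deletable (T : finType) (adj o : rel T) (a b : T) : Prop :=
  adj a b /\ strong (del_edge o a b).

Definition same_edge (T : eqType) (a b c d : T) : bool :=
  ((a == c) && (b == d)) || ((a == d) && (b == c)).

Definition x1 (T : finType) : T + bool := inr false.
Definition x2 (T : finType) : T + bool := inr true.

Definition adj' (T : finType) (adj : rel T) (u1 v1 u2 v2 : T) : rel (T + bool) :=
  fun x y =>
  match x, y with
  | inl a, inl b => adj a b && ~~ same_edge a b u1 v1 && ~~ same_edge a b u2 v2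
  | inl a, inr false => (a == u1) || (a == v1)
  | inr false, inl b => (b == u1) || (b == v1)
  | inl a, inr true => (a == u2) || (a == v2)
  | inr true, inl b => (b == u2) || (b == v2)
  | inr false, inr true => true
  | inr true, inr false => true
  | inr _, inr _ => false
  end.

Definition o' (T : finType) (o : rel T) (u1 v1 u2 v2 : T) : rel (T + bool) :=
  fun x y =>
  match x, y with
  | inl a, inl b => o a b && ~~ same_edge a b u1 v1 && ~~ same_edge a b u2 v2
  | inl a, inr false => a == u1
  | inr false, inl b => b == v1
  | inl a, inr true => a == u2
  | inr true, inl b => b == v2
  | inr false, inr true => true
  | inr _, inr _ => false
  end.

(* Main.v *)
Require Import Defs.
From mathcomp Require Import all_boot.

Lemma lift_connect (T : finType) (r : rel T) (r' : rel (T + bool)) :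
  (forall a b, r a b -> connect r' (inl a) (inl b)) ->
  forall a b, connect r a b -> connect r' (inl a) (inl b).
Proof.
move=> H a b /connectP [p]; elim: p a => [|c p IH] a /=.
  by move=> _ ->.
case/andP=> rac pc bl; apply: connect_trans (H _ _ rac) (IH _ pc bl).
Qed.

Lemma strong_lift (T : finType) (r : rel T) (r' : rel (T + bool)) :
  strong r -> (forall a b, r a b -> connect r' (inl a) (inl b)) ->
  (forall i, exists a, connect r' (inl a) (inr i)) ->
  (forall i, exists a, connect r' (inr i) (inl a)) -> strong r'.
Proof.
move=> Hs H Hin Hout.
have L : forall a b, connect r' (inl a) (inl b) by move=> a b; exact: (@lift_connect _ r r' H a b (Hs a b)).
case=> [a|i] [b|j].
- exact: L.
- have [c Hc] := Hin j; exact: connect_trans (L _ _) Hc.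
- have [c Hc] := Hout i; exact: connect_trans Hc (L _ _).
- have [c Hc] := Hout i; have [d Hd] := Hin j.
  exact: connect_trans Hc (connect_trans (L _ _) Hd).
Qed.

Lemma edge_helper (T : finType) (r : rel T) (R : rel (T + bool)) (u1 v1 u2 v2 : T) :
  (forall a b, r a b -> ~~ ((a == u1) && (b == v1)) -> ~~ ((a == u2) && (b == v2)) ->
     R (inl a) (inl b)) ->
  (r u1 v1 -> connect R (inl u1) (inl v1)) ->
  (r u2 v2 -> connect R (inl u2) (inl v2)) ->
  forall a b, r a b -> connect R (inl a) (inl b).
Proof.
move=> H H1 H2 a b rab.
case: (boolP ((a == u1) && (b == v1))) => [/andP[/eqP ea /eqP eb]|h1].
  by rewrite ea eb; apply: H1; rewrite -ea -eb.
case: (boolP ((a == u2) && (b == v2))) => [/andP[/eqP ea /eqP eb]|h2].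
  by rewrite ea eb; apply: H2; rewrite -ea -eb.
by apply: connect1; apply: H.
Qed.

Lemma eq_inlE (A B : eqType) (a b : A) : (inl a == inl b :> A + B) = (a == b).
Proof. by apply/eqP/eqP => [[]|->]. Qed.
Lemma eq_inrE (A B : eqType) (a b : B) : (inr a == inr b :> A + B) = (a == b).
Proof. by apply/eqP/eqP => [[]|->]. Qed.
Lemma eq_inlr (A B : eqType) (a : A) (b : B) : (inl a == inr b :> A + B) = false.
Proof. by apply/eqP. Qed.
Lemma eq_inrl (A B : eqType) (a : A) (b : B) : (inr b == inl a :> A + B) = false.
Proof. by apply/eqP. Qed.

Ltac step1 := apply: connect1; rewrite /del_edge /= ?eq_inlE ?eq_inrE ?eq_inlr ?eq_inrl ?eqxx ?orbT ?andbT ?andbF /=.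
Ltac step2 z := apply: (@connect_trans _ _ z); step1.

Theorem mainTheorem7 (T : finType) (adj o : rel T) (u1 v1 u2 v2 : T) :
  simple_graph adj -> cubic adj ->
  is_orientation adj o -> strong o ->
  adj u1 v1 -> o u1 v1 -> adj u2 v2 -> o u2 v2 ->
  (* e1 = u1v1 and e2 = u2v2 are non-adjacent (no common endpoint) *)
  u1 != u2 -> u1 != v2 -> v1 != u2 -> v1 != v2 ->
  deletable adj o u1 v1 -> deletable adj o u2 v2 ->
  is_orientation (adj' adj u1 v1 u2 v2) (o' o u1 v1 u2 v2) /\
  strong (o' o u1 v1 u2 v2) /\
  (forall a b : T, deletable adj o a b ->
     ~~ same_edge a b u1 v1 -> ~~ same_edge a b u2 v2 ->
     deletable (adj' adj u1 v1 u2 v2) (o' o u1 v1 u2 v2) (inl a) (inl b)) /\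
  deletable (adj' adj u1 v1 u2 v2) (o' o u1 v1 u2 v2) (x1 T) (inl v1) /\
  deletable (adj' adj u1 v1 u2 v2) (o' o u1 v1 u2 v2) (x1 T) (x2 T) /\
  deletable (adj' adj u1 v1 u2 v2) (o' o u1 v1 u2 v2) (inl u2) (x2 T).
Proof.
move=> [Hsym Hirr] _ Hor Hs Hadj1 Ho1 Hadj2 Ho2 n12 n1v2 nv12 nv1v2 [_ D1] [_ D2].
have Hu1v1 : u1 != v1.
  by apply/eqP=> E; move: Hadj1; rewrite E (negbTE (Hirr v1)).
have Hu2v2 : u2 != v2.
  by apply/eqP=> E; move: Hadj2; rewrite E (negbTE (Hirr v2)).
have anti : forall a b, o a b -> o b a = false.
  by move=> a b oab; have [_ /negP h] := Hor a b; apply/negP=> oba; apply: h; rewrite oab oba.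
have sim : forall a b, o a b -> ~~ ((a == u1) && (b == v1)) -> ~~ ((a == u2) && (b == v2)) ->
    o' o u1 v1 u2 v2 (inl a) (inl b).
  move=> a b oab h1 h2; rewrite /o' oab /same_edge (negbTE h1) (negbTE h2) /=.
  apply/andP; split; apply/negP=> /andP[/eqP ea /eqP eb]; move: oab;
    by rewrite ea eb anti.
split.
  move=> [a|[]] [b|[]] /=.
  - have sC : forall c d u v : T, same_edge c d u v = same_edge d c u v.
      by move=> c d u v; rewrite /same_edge andbC [in X in _ || X]andbC orbC.
    have [-> _] := Hor a b; rewrite !(sC b a).
    case oab: (o a b); case oba: (o b a) => //=; first by rewrite anti in oba.
    by rewrite orbF andbF.
  all: try (split; [first [done | by rewrite orbC] | apply/negP => /andP[/eqP ea /eqP eb]; subst;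
     by rewrite ?eqxx in Hu1v1 Hu2v2]).
  all: try by [].
split.
  apply: (@strong_lift _ o) => //.
  - apply: (@edge_helper _ _ _ u1 v1 u2 v2).
    + by move=> a b oab h1 h2; apply: sim.
    + by move=> _; step2 (x1 T).
    + by move=> _; step2 (x2 T).
  - by case; [exists u2 | exists u1]; step1.
  - by case; [exists v2 | exists v1]; step1.
split.
  move=> a b [adab Dab] n1 n2; split; first by rewrite /= adab n1 n2.
  apply: (@strong_lift _ (del_edge o a b)) => //.
  - apply: (@edge_helper _ _ _ u1 v1 u2 v2).
    + move=> c d /andP[ocd ncd] h1 h2.
      by rewrite /del_edge /= !eq_inlE ncd andbT; apply: sim.
    + by move=> _; step2 (x1 T).
    + by move=> _; step2 (x2 T).
  - by case; [exists u2 | exists u1]; step1.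
  - by case; [exists v2 | exists v1]; step1.
split.
  split; first by rewrite /= eqxx orbT.
  apply: (@strong_lift _ (del_edge o u1 v1)) => //.
  - apply: (@edge_helper _ _ _ u1 v1 u2 v2).
    + move=> c d /andP[ocd ncd] h1 h2.
      by rewrite /del_edge /= ?eq_inlE ?eq_inrl ?eq_inlr andbF andbT; exact: sim.
    + by move=> /andP[_]; rewrite !eqxx.
    + by move=> _; step2 (x2 T).
  - by case; [exists u2 | exists u1]; step1.
  - by case; [exists v2 | exists v2]; [step1 | step2 (x2 T)].
split.
  split; first by [].
  apply: (@strong_lift _ o) => //.
  - apply: (@edge_helper _ _ _ u1 v1 u2 v2).
    + move=> c d ocd h1 h2.
      by rewrite /del_edge /= ?eq_inlE ?eq_inrl ?eq_inlr andbT; exact: sim.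
    + by move=> _; step2 (x1 T).
    + by move=> _; step2 (x2 T).
  - by case; [exists u2 | exists u1]; step1.
  - by case; [exists v2 | exists v1]; step1.
split; first by rewrite /= eqxx.
apply: (@strong_lift _ (del_edge o u2 v2)) => //.
- apply: (@edge_helper _ _ _ u1 v1 u2 v2).
  + move=> c d /andP[ocd ncd] h1 h2.
    by rewrite /del_edge /= ?eq_inlE ?eq_inrl ?eq_inlr andbF andbT; exact: sim.
  + by move=> _; step2 (x1 T).
  + by move=> /andP[_]; rewrite !eqxx.
- by case; [exists u1 | exists u1]; [step2 (x1 T) | step1].
- by case; [exists v2 | exists v1]; step1; rewrite ?(eq_sym v2).
Qed.
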